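(* If $X\in\mathbf{M}_{2n}(\mathbb{C})$ satisfies $X^{\sharp}=X$, then there is a unitary $U\in\mathbf{M}_{2n}(\mathbb{C})$ with $U^{\sharp}=U$ and $X=U|X|$, where $|X|=(X^*X)^{1/2}$.
   Context: For $X\in\mathbf{M}_{2n}(\mathbb{C})$ in $n\times n$ blocks $X=\begin{bmatrix}A&B\\C&D\end{bmatrix}$, the dual operation is $X^{\sharp}=\begin{bmatrix}D^{\mathrm T}&-B^{\mathrm T}\\-C^{\mathrm T}&A^{\mathrm T}\end{bmatrix}$. $(X^*X)^{1/2}$ is the positive semidefinite square root. *)

(* Defs.v *)
From HB Require Import structures.
From mathcomp Require Import all_boot all_order all_algebra.
From mathcomp Require Import complex.
From mathcomp Require Import reals.
Set Implicit Arguments. Unset Strict Implicit. Unset Printing Implicit Defensive.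
Import Order.TTheory GRing.Theory Num.Theory.
Local Open Scope ring_scope.
Local Open Scope sesquilinear_scope.
Local Open Scope complex_scope.

Definition sharp {F : pzRingType} (n : nat) (X : 'M[F]_(n + n)) : 'M[F]_(n + n) :=
  block_mx (drsubmx X)^T (- (ursubmx X)^T)
           (- (dlsubmx X)^T) (ulsubmx X)^T.

Definition psdmx {C : numClosedFieldType} (m : nat) (P : 'M[C]_m) : Prop :=
  P ^t* = P /\ forall v : 'cV[C]_m, 0 <= (v ^t* *m P *m v) 0 0.

Definition is_psd_sqrt {C : numClosedFieldType} (m : nat) (P Q : 'M[C]_m) : Prop :=
  psdmx P /\ P *m P = Q.

(* Main.v *)
Require Import Defs.
From HB Require Import structures.
From mathcomp Require Import all_boot all_order all_algebra.
From mathcomp Require Import complex.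
From mathcomp Require Import reals.
Import Order.TTheory GRing.Theory Num.Theory.
Local Open Scope ring_scope.
Local Open Scope sesquilinear_scope.
Local Open Scope complex_scope.


Set Implicit Arguments. Unset Strict Implicit. Unset Printing Implicit Defensive.


Section Gen.
Variable C : numClosedFieldType.

Lemma adjM m n p (A : 'M[C]_(m, n)) (B : 'M[C]_(n, p)) :
  (A *m B)^t* = B^t* *m A^t*.
Proof. by rewrite trmx_mul map_mxM. Qed.

Lemma adjD m n (A B : 'M[C]_(m, n)) : (A + B)^t* = A^t* + B^t*.
Proof. by rewrite linearD /= map_mxD. Qed.

Lemma AtA0 m n (A : 'M[C]_(m, n)) : A^t* *m A = 0 -> A = 0.
Proof.
move=> H; apply/matrixP => i j; move/matrixP: H => /(_ j j).
rewrite !mxE => /psumr_eq0P H2.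
have /eqP : (A^t*) j i * A i j = 0.
  apply: H2 => // k _; rewrite !mxE. by rewrite mulrC -normCK exprn_ge0.
by rewrite !mxE mulf_eq0 conjC_eq0 orbb => /eqP.
Qed.
End Gen.


Section Skew.
Variable C : numFieldType.

Lemma skew_rank_even m (S : 'M[C]_m) : S^T = - S -> ~~ odd (\rank S).
Proof.
move=> ST.
set L := kermx S.
set Co := row_base (L^C)%MS.
have rk : \rank (L^C)%MS = \rank S.
  by rewrite mxrank_compl mxrank_ker subKn // rank_leq_row.
rewrite -rk.
have LS : L *m S = 0 := mulmx_ker S.
have CoE : (Co :=: L^C)%MS := eq_row_base _.
have Cofree : row_free Co := row_base_free _.
have subL p (z : 'M_(p, m)) : z *m S = 0 -> (z <= L)%MS.
  by move=> zS; rewrite sub_kermx zS.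
clearbody Co L.
set M := Co *m S *m Co^T.
have detM : \det M != 0.
  apply/det0P => -[x nz0 xM0].
  set y := x *m Co.
  have h1 : y *m S *m Co^T = 0 by move: xM0; rewrite /M /y !mulmxA.
  have h2 : y *m S *m L^T = 0.
    apply: trmx_inj; rewrite !trmx_mul ST trmx0 trmxK mulNmx mulmxN mulmxA LS.
    by rewrite mul0mx oppr0.
  have yS : y *m S = 0.
    have : (1%:M <= L + Co)%MS.
      apply: submx_full; rewrite /row_full (adds_eqmx (eqmx_refl L) CoE).
      exact: addsmx_compl_full.
    case/sub_addsmxP => -[u1 u2] /= E1.
    rewrite -[y *m S]mulmx1 -trmx1 E1 linearD /= !trmx_mul mulmxDr !mulmxA.
    by rewrite h1 h2 !mul0mx addr0.
  have : (y <= L :&: L^C)%MS.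
    rewrite sub_capmx subL //=.
    by rewrite -CoE submxMl.
  rewrite capmx_compl submx0 /y => /eqP xC0.
  move: nz0; rewrite -(row_free_inj Cofree (x1:=x) (x2:=0)) ?eqxx //.
  by rewrite mul0mx.
apply/negP => oddr; move: detM.
have MT : M^T = - M.
  rewrite /M !trmx_mul trmxK ST.
  by rewrite mulNmx mulmxN mulmxA.
have := det_tr M; rewrite MT -scaleN1r detZ -signr_odd oddr expr1 mulN1r.
move=> /eqP; rewrite eq_sym -subr_eq0 opprK -mulr2n mulrn_eq0 /= => /eqP ->.
by rewrite eqxx.
Qed.
End Skew.

Definition Jmx {C : numClosedFieldType} (n : nat) : 'M[C]_(n + n) :=
  block_mx 0 1%:M (-1%:M) 0.


Section GenJ.
Variable C : numClosedFieldType.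
Variable n : nat.
Local Notation Jmx := (@Jmx C n).

Lemma JT : Jmx^T = - Jmx.
Proof.
rewrite /Jmx /= tr_block_mx !trmx0 trmx1 linearN /= trmx1 opp_block_mx.
by rewrite !oppr0 opprK.
Qed.

Lemma JJ : Jmx *m Jmx = - 1%:M.
Proof.
rewrite /Jmx /= mulmx_block !mul0mx !mulmx0 !mul1mx ?mulmxN !mulmx1 !add0r !addr0.
by rewrite [X in _ = - X]scalar_mx_block opp_block_mx !oppr0.
Qed.

Lemma JJt : Jmx *m Jmx^T = 1%:M.
Proof. by rewrite JT mulmxN JJ opprK. Qed.

Lemma JtJ : Jmx^T *m Jmx = 1%:M.
Proof. by rewrite JT mulNmx JJ opprK. Qed.

Lemma Jconj : Jmx ^ Num.conj = Jmx.
Proof. by rewrite /Jmx /= map_block_mx !map_mx0 map_mxN map_mx1. Qed.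

Lemma sharpE (X : 'M[C]_(n + n)) : sharp X = Jmx *m X^T *m Jmx^T.
Proof.
rewrite JT mulmxN /sharp -[in RHS](submxK X) tr_block_mx /Jmx /= !mulmx_block.
rewrite !mul0mx !mulmx0 !mul1mx !mulmxN !mulmx1 !mulNmx !mul1mx !add0r !addr0.
by rewrite opp_block_mx !opprK.
Qed.
End GenJ.


Section Gen4.
Variable C : numClosedFieldType.

Lemma unit_tV m (V : 'M[C]_m) : V \is unitarymx -> V^t* *m V = 1%:M.
Proof. by move/unitarymxP/mulmx1C. Qed.

Lemma mulUUt p m (A : 'M[C]_(p, m)) (V : 'M[C]_m) :
  V \is unitarymx -> A *m V *m V^t* = A.
Proof. by move=> Vu; rewrite mulmxtVK. Qed.

Lemma mulUtU p m (A : 'M[C]_(p, m)) (V : 'M[C]_m) :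
  V \is unitarymx -> A *m V^t* *m V = A.
Proof. by move=> Vu; rewrite mulmxKtV. Qed.

Lemma canc m (V W A B : 'M[C]_m) : V \is unitarymx -> W \is unitarymx ->
  W^t* *m A *m V = W^t* *m B *m V -> A = B.
Proof.
move=> Vu Wu h; have := congr1 (fun M => W *m M *m V^t*) h => /=.
by rewrite !mulmxA (unitarymxP Wu) !mul1mx !(mulUUt _ Vu).
Qed.

Lemma diag_sq_comm m (d : 'rV[C]_m) (Y : 'M[C]_m) : (forall i, 0 <= d 0 i) ->
  diag_mx d *m (diag_mx d *m Y) = Y *m diag_mx d *m diag_mx d ->
  diag_mx (map_mx GRing.inv d) *m Y = Y *m diag_mx (map_mx GRing.inv d).
Proof.
move=> d0 /matrixP H; apply/matrixP => i j; have := H i j.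
rewrite !mul_diag_mx !mul_mx_diag !mxE.
have [->|y0] := eqVneq (Y i j) 0; first by rewrite !mulr0 !mul0r.
move=> e.
have e2 : d 0 i ^+ 2 = d 0 j ^+ 2.
  apply: (mulIf y0); rewrite -mulrA e [RHS]mulrC [d 0 j ^+ 2]expr2.
  by rewrite mulrA.
have : d 0 i = d 0 j by apply/eqP; rewrite -(eqrXn2 (n:=2)) // e2.
by move=> ->; rewrite mulrC.
Qed.

Lemma intertw m (V W : 'M[C]_m) (d : 'rV[C]_m) (Y : 'M[C]_m) :
  V \is unitarymx -> W \is unitarymx -> (forall i, 0 <= d 0 i) ->
  W^t* *m diag_mx d *m W *m (W^t* *m diag_mx d *m W) *m Y =
    Y *m (V^t* *m diag_mx d *m V *m (V^t* *m diag_mx d *m V)) ->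
  W^t* *m diag_mx (map_mx GRing.inv d) *m W *m Y =
    Y *m (V^t* *m diag_mx (map_mx GRing.inv d) *m V).
Proof.
move=> Vu Wu d0 H.
set Y' := W *m Y *m V^t*.
have YE : Y = W^t* *m Y' *m V.
  by rewrite /Y' !mulmxA (unit_tV Wu) mul1mx (mulUtU _ Vu).
clearbody Y'.
have key : diag_mx d *m (diag_mx d *m Y') = Y' *m diag_mx d *m diag_mx d.
  apply: (canc Vu Wu); move: H; rewrite YE !mulmxA !(mulUUt _ Wu) !(mulUUt _ Vu).
  by [].

have := diag_sq_comm d0 key => key2.
rewrite YE !mulmxA !(mulUUt _ Wu) !(mulUUt _ Vu).
by rewrite -(mulmxA _ _ Y') key2 mulmxA.
Qed.
End Gen4.

Section GenJ2.
Variable C : numClosedFieldType.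
Variable n : nat.
Local Notation J := (@Jmx C n).

Lemma Jadj : J^t* = J^T.
Proof. by rewrite -map_trmx Jconj. Qed.

Lemma Junit : J \is unitarymx.
Proof. by apply/unitarymxP; rewrite Jadj JJt. Qed.

Lemma sharpM (A B : 'M[C]_(n + n)) : sharp (A *m B) = sharp B *m sharp A.
Proof. by rewrite !sharpE trmx_mul -!mulmxA (mulmxA J^T J) JtJ mul1mx. Qed.

Lemma sharpD (A B : 'M[C]_(n + n)) : sharp (A + B) = sharp A + sharp B.
Proof. by rewrite !sharpE linearD /= mulmxDr mulmxDl. Qed.

Lemma sharp_adj (A : 'M[C]_(n + n)) : sharp (A^t*) = (sharp A)^t*.
Proof.
rewrite !sharpE !adjM Jadj !trmxK map_trmx trmxK Jconj.
by rewrite mulmxA.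
Qed.
End GenJ2.

Lemma skew_unitary (C : numClosedFieldType) k : ~~ odd k ->
  exists M : 'M[C]_k, M \is unitarymx /\ M^T = - M.
Proof.
move=> ek; rewrite -[k]odd_double_half (negbTE ek) add0n -addnn.
by exists (Jmx k./2); split; [exact: Junit | exact: JT].
Qed.

Section MainGen.
Variable C : numClosedFieldType.
Variable n : nat.
Local Notation J := (@Jmx C n).

Lemma scal_id1 (x : C) : x * x^-1 * x = x.
Proof. by have [->|x0] := eqVneq x 0; rewrite ?mulr0 ?mul0r // mulfV // mul1r. Qed.

Lemma scal_id2 (x : C) : x^-1 * x * x * x^-1 = x^-1 * x.
Proof.
by have [->|x0] := eqVneq x 0; rewrite ?mulr0 ?mul0r // mulVf // mul1r mulfV.
Qed.

Lemma diag_mul m (a b : 'rV[C]_m) :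
  diag_mx a *m diag_mx b = diag_mx (\row_j (a 0 j * b 0 j)).
Proof.
apply/matrixP => i j; rewrite mul_diag_mx !mxE.
by case: eqP => [->|_]; rewrite ?mulr1n ?mulr0n ?mulr0.
Qed.

Lemma assoc2 (Q A B R : 'M[C]_(n + n)) : Q *m A *m B *m R = Q *m (A *m B) *m R.
Proof. by rewrite !mulmxA. Qed.
Lemma assoc3 (Q A B D R : 'M[C]_(n + n)) :
  Q *m A *m B *m D *m R = Q *m (A *m B *m D) *m R.
Proof. by rewrite !mulmxA. Qed.
Lemma assoc4 (Q A B D E R : 'M[C]_(n + n)) :
  Q *m A *m B *m D *m E *m R = Q *m (A *m B *m D *m E) *m R.
Proof. by rewrite !mulmxA. Qed.

Theorem main_gen (X : 'M[C]_(n + n)) : sharp X = X ->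
  forall P : 'M[C]_(n + n), psdmx P -> P *m P = X^t* *m X ->
  exists U : 'M[C]_(n + n), [/\ U \is unitarymx, sharp U = U & X = U *m P].
Proof.
move=> hX P [Ph Ppos] PP.
have Pn : P \is normalmx by apply/normalmxP; rewrite Ph.
have Vu : spectralmx P \is unitarymx := spectral_unitarymx P.
have PE : P = (spectralmx P)^t* *m diag_mx (spectral_diag P) *m spectralmx P.
  by rewrite -invmx_unitary //; exact/orthomx_spectralP.
move: Vu PE; set V := spectralmx P; set d := spectral_diag P => Vu PE.
clearbody V d.
have d0 : forall i, 0 <= d 0 i.
  move=> i; have := Ppos (V^t* *m delta_mx i 0).
  have dE : (delta_mx i 0 : 'cV[C]_(n + n))^t* = delta_mx 0 i.
    by apply/matrixP => a b; rewrite !mxE rmorph_nat andbC.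
  rewrite (adjM (V^t*) (delta_mx i 0)).
 rewrite trmxCK dE PE !mulmxA !(mulUUt _ Vu) -rowE -colE !mxE eqxx.
  by rewrite mulr1n.
have dr : forall i, Num.conj (d 0 i) = d 0 i by move=> i; exact/conj_Creal/ger0_real.
pose Di := diag_mx (map_mx GRing.inv d).
have DDi : diag_mx d *m Di = Di *m diag_mx d.
  by rewrite /Di !diag_mul; congr diag_mx; apply/rowP => j; rewrite !mxE mulrC.
have DDiD : diag_mx d *m Di *m diag_mx d = diag_mx d.
  by rewrite /Di !diag_mul; congr diag_mx; apply/rowP => j; rewrite !mxE scal_id1.
have DiDDDi : Di *m diag_mx d *m diag_mx d *m Di = Di *m diag_mx d.
  by rewrite /Di !diag_mul; congr diag_mx; apply/rowP => j; rewrite !mxE scal_id2.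
have Dih : Di^t* = Di.
  apply/matrixP => a b; rewrite /Di !mxE.
  have [->|ab] := eqVneq a b; first by rewrite !mulr1n conj_Creal // ger0_real // invr_ge0.
  by rewrite !mulr0n rmorph0.
have DiE : Di = diag_mx (map_mx GRing.inv d) by [].
clearbody Di.
pose Pp := V^t* *m Di *m V.
have Pph : Pp^t* = Pp.
  by rewrite /Pp (adjM (V^t* *m Di) V) (adjM (V^t*) Di) trmxCK Dih mulmxA.
have PPp : P *m Pp = Pp *m P.
  by rewrite PE /Pp !mulmxA !(mulUUt _ Vu) assoc2 DDi -assoc2.
have PPpP : P *m Pp *m P = P.
  by rewrite {3}PE PE /Pp !mulmxA !(mulUUt _ Vu) assoc3 DDiD.
have PpPPPp : Pp *m P *m P *m Pp = Pp *m P.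
  by rewrite PE /Pp !mulmxA !(mulUUt _ Vu) assoc4 DiDDDi -assoc2.
have PpE : Pp = V^t* *m Di *m V by [].
clearbody Pp.
pose E := 1%:M - Pp *m P.
have PE0 : P *m E = 0 by rewrite /E mulmxBr mulmx1 mulmxA PPpP subrr.
have XE0 : X *m E = 0.
  apply: AtA0; rewrite (adjM X E) -mulmxA (mulmxA (X^t*) X) -PP -mulmxA PE0.
  by rewrite !mulmx0.
have Eh : E^t* = E.
  rewrite /E linearB /= map_mxB /= trmx1 map_mx1 (adjM Pp P) Ph Pph.
  by rewrite PPp.
have EE : E = 1%:M - Pp *m P by [].
clearbody E.
pose R := schmidt (row_base (kermx X^T)).
have Ru : R \is unitarymx := schmidt_unitarymx _ (rank_leq_col _).
have RE : (R :=: kermx X^T)%MS.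
  exact: eqmx_trans (eqmx_schmidt_free (row_base_free _)) (eq_row_base _).
move: R Ru RE => R Ru RE.
pose k := \rank (kermx X^T).
pose B := R^T.
have BtB : B^t* *m B = 1%:M.
  have := congr1 (map_mx Num.conj) (unitarymxP Ru).
  by rewrite map_mxM map_mx1 map_mxCK /B trmxK.
have XB0 : X *m B = 0.
  have : (R <= kermx X^T)%MS by rewrite RE.
  rewrite sub_kermx => /eqP h; apply: trmx_inj.
  by rewrite trmx_mul trmxK h trmx0.
have Bfix : forall Z : 'M[C]_(n + n), X *m Z = 0 -> B *m B^t* *m Z = Z.
  move=> Z XZ; have : (Z^T <= R)%MS by rewrite RE sub_kermx -trmx_mul XZ trmx0.
  case/submxP => A ZA; have -> : Z = B *m A^T by rewrite /B -trmx_mul -ZA trmxK.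
  by rewrite mulmxA -(mulmxA B) BtB mulmx1.
have XT : X^T = J *m X *m J^T.
  by rewrite -{1}hX sharpE !trmx_mul !trmxK mulmxA.
have keven : ~~ odd k.
  have oN : odd (n + n) = false by rewrite addnn odd_double.
  rewrite /k mxrank_ker mxrank_tr oddB ?rank_leq_row // oN /=.
  have -> : \rank X = \rank (X *m J).
    by rewrite mxrankMfree // row_free_unit unitarymx_unit // Junit.
  apply: skew_rank_even.
  by rewrite trmx_mul XT !mulmxA JtJ mul1mx JT mulmxN.
clearbody B.
have [M [Mu MT]] := @skew_unitary C k keven.
pose Bc := B ^ Num.conj.
pose Nm := J *m Bc *m M *m B^t*.
have BcBc : Bc^t* *m Bc = 1%:M.
  have := congr1 (map_mx Num.conj) BtB; rewrite map_mxM map_mx1 map_mxCK => <-.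
  by rewrite /Bc map_trmx map_mxCK.
have XtJBc : X^t* *m J *m Bc = 0.
  have h : X^T *m J *m B = 0.
    have XJ : X^T *m J = J *m X.
      by rewrite XT -!mulmxA JtJ mulmx1.
    by rewrite XJ -mulmxA XB0 mulmx0.
  by have := congr1 (map_mx Num.conj) h; rewrite !map_mxM Jconj map_mx0.
have XtN : X^t* *m Nm = 0 by rewrite /Nm !mulmxA XtJBc !mul0mx.
have NtX : Nm^t* *m X = 0.
  by rewrite -[X in _ *m X]trmxCK -adjM XtN trmx0 map_mx0.
have NtN : Nm^t* *m Nm = B *m B^t*.
  rewrite /Nm !adjM trmxCK !mulmxA (mulUtU _ (Junit C n)).
  rewrite -[_ *m Bc^t* *m Bc]mulmxA BcBc mulmx1.
  by rewrite -[_ *m M^t* *m M]mulmxA (unit_tV Mu) mulmx1.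
have GE := Bfix E XE0.
have PB0 : P *m B = 0.
  apply: AtA0; rewrite adjM Ph !mulmxA -(mulmxA (B^t*) P P) PP -!mulmxA XB0.
  by rewrite !mulmx0.
have EB : E *m B = B by rewrite EE mulmxBl mul1mx -mulmxA PB0 mulmx0 subr0.
have EG : B *m B^t* = E.
  have Gh : (B *m B^t*)^t* = B *m B^t* by rewrite adjM trmxCK.
  by apply/esym; rewrite -Eh -{1}GE adjM Eh Gh mulmxA EB.
have PpPE : Pp *m P = 1%:M - E by rewrite EE opprB addrC subrK.
pose U := X *m Pp + Nm.
have Uh : U^t* = Pp *m X^t* + Nm^t* by rewrite /U adjD adjM Pph.
have UtU : U^t* *m U = 1%:M.
  rewrite Uh mulmxDl !mulmxDr.
  have T1 : Pp *m X^t* *m (X *m Pp) = 1%:M - E.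
    by rewrite mulmxA -(mulmxA Pp (X^t*) X) -PP !mulmxA PpPPPp.
  rewrite T1 -mulmxA XtN mulmx0 mulmxA NtX mul0mx NtN EG.
  by rewrite addr0 add0r subrK.
have BtP : B^t* *m P = 0.
  by have := congr1 (fun A => A^t*) PB0; rewrite /= adjM Ph trmx0 map_mx0.
have UP : X = U *m P.
  rewrite /U mulmxDl -mulmxA PpPE mulmxBr mulmx1 XE0 subr0 /Nm -mulmxA BtP.
  by rewrite mulmx0 addr0.
pose W := map_mx Num.conj V *m J^T.
have Wu : W \is unitarymx.
  by rewrite mul_unitarymx // ?conjC_unitary ?trmx_unitary // (Junit C n).
have Wt : W^t* = J *m V^T.
  by rewrite /W adjM trmxK Jconj map_trmx map_mxCK.
have sharpconj : forall e, sharp (V^t* *m diag_mx e *m V) = W^t* *m diag_mx e *m W.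
  move=> e; rewrite sharpE Wt /W !trmx_mul tr_diag_mx map_trmx trmxK.
  by rewrite !mulmxA.
have SPp : sharp Pp *m X = X *m Pp.
  rewrite PpE DiE sharpconj; apply: intertw => //.
  rewrite -sharpconj -PE.
  rewrite -sharpM PP sharpM sharp_adj hX.
  by rewrite mulmxA.
have SNm : sharp Nm = Nm.
  rewrite sharpE /Nm /Bc !trmx_mul !map_trmx trmxK MT mulNmx !mulmxN mulNmx.
  rewrite !mulmxA -(mulmxA _ J^T J^T) -trmx_mul JJ linearN /= trmx1.
  by rewrite mulmxN mulmx1 opprK.
exists U; split.
- by apply/unitarymxP; exact: mulmx1C UtU.
- by rewrite /U sharpD sharpM hX SPp SNm.
- exact: UP.
Qed.
End MainGen.

(* |X| = (X^* X)^{1/2} is the (unique) positive semidefinite square root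
   of X^* X; we quantify over it as "any P psd with P P = X^* X". *)
Theorem mainTheorem12 (R : realType) (n : nat) (X : 'M[R[i]]_(n + n)) :
  sharp X = X ->
  forall absX : 'M[R[i]]_(n + n), is_psd_sqrt absX (X ^t* *m X) ->
  exists U : 'M[R[i]]_(n + n),
    [/\ U \is unitarymx, sharp U = U & X = U *m absX].
Proof.
move=> hX absX [Ppsd PP].
exact: (@main_gen (R[i]) n X hX absX Ppsd PP).
Qed.
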